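(* Let $\mathcal{X}=({\bm X},m^{\bm X}_\bullet,\nu^{\bm X})$, $\mathcal{Y}=({\bm Y},m^{\bm Y}_\bullet,\nu^{\bm Y})$ be finite Markov chains, $C:{\bm X}\times{\bm Y}\to\mathbb{R}_+$ a cost matrix, $\delta\in[0,1]$ and $k\in\mathbb{N}$. Define matrices $C^{\delta,(l)}$, $l=0,\dots,k$, by $C^{\delta,(0)}_{ij}=C_{ij}$ and $C^{\delta,(l+1)}_{ij}=\delta C_{ij}+(1-\delta)\,d_{\mathrm W}(m^{\bm X}_i,m^{\bm Y}_j;C^{\delta,(l)})$ for $i\in{\bm X},j\in{\bm Y}$. Then $d^{\delta,(k)}_{\mathrm{WL}}(\mathcal{X},\mathcal{Y};C)=d_{\mathrm W}(\nu^{\bm X},\nu^{\bm Y};C^{\delta,(k)})$.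
   Context: A finite Markov chain consists of a finite set, a transition kernel $m^{\bm X}_\bullet:{\bm X}\to\mathcal{P}({\bm X})$ and an initial distribution. For $\alpha\in\mathcal{P}({\bm X}),\beta\in\mathcal{P}({\bm Y})$ and $D:{\bm X}\times{\bm Y}\to\mathbb{R}_+$, $d_{\mathrm W}(\alpha,\beta;D)=\inf_{(X,Y)\in\mathcal{C}(\alpha,\beta)}\mathbb{E}\,D(X,Y)$, where $\mathcal{C}(\alpha,\beta)$ is the set of couplings. A Markovian coupling between $\mathcal{X}$ and $\mathcal{Y}$ is a (possibly time-inhomogeneous) Markov chain $(X_t,Y_t)_{t\in\mathbb{N}}$ on ${\bm X}\times{\bm Y}$ with $\mathrm{law}(X_0,Y_0)\in\mathcal{C}(\nu^{\bm X},\nu^{\bm Y})$ and, for all $t,x,y$, the conditional law of $(X_{t+1},Y_{t+1})$ given $(X_t,Y_t)=(x,y)$ in $\mathcal{C}(m^{\bm X}_x,m^{\bm Y}_y)$; $\Pi(\mathcal{X},\mathcal{Y})$ is their set. $d^{\delta,(k)}_{\mathrm{WL}}(\mathcal{X},\mathcal{Y};C)=\inf_{\Pi(\mathcal{X},\mathcal{Y})}\mathbb{E}\big[\sum_{t=0}^{k-1}\delta(1-\delta)^tC(X_t,Y_t)+(1-\delta)^kC(X_k,Y_k)\big]$. *)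

(* Defs.v *)
From HB Require Import structures.
From mathcomp Require Import all_boot all_order all_algebra.
From mathcomp Require Import boolp classical_sets reals.
Set Implicit Arguments. Unset Strict Implicit. Unset Printing Implicit Defensive.
Import Order.TTheory GRing.Theory Num.Theory.
Local Open Scope ring_scope.
Local Open Scope classical_set_scope.

Section Defs.
Variable R : realType.

Definition is_pmf (T : finType) (p : T -> R) :=
  (forall t, 0 <= p t) /\ \sum_(t : T) p t = 1.

Record fmc (X : finType) := FMC {
  kern : X -> X -> R;
  init : X -> R;
  kern_pmf : forall x, is_pmf (kern x);
  init_pmf : is_pmf init }.

Definition is_coupling (X Y : finType) (a : X -> R) (b : Y -> R)
  (p : X -> Y -> R) :=
  [/\ forall x y, 0 <= p x y,
      forall x, \sum_(y : Y) p x y = a x &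
      forall y, \sum_(x : X) p x y = b y].

Definition dW (X Y : finType) (a : X -> R) (b : Y -> R) (D : X -> Y -> R) : R :=
  inf [set r | exists p, is_coupling a b p /\
                 r = \sum_(x : X) \sum_(y : Y) p x y * D x y].

(* A Markovian coupling is given by its initial joint law mu and its
   (time-inhomogeneous) transition kernels K t (x,y) on X * Y. *)
Definition is_markov_coupling (X Y : finType) (MX : fmc X) (MY : fmc Y)
  (mu : X -> Y -> R) (K : nat -> X -> Y -> X -> Y -> R) :=
  is_coupling (init MX) (init MY) mu /\
  forall t x y, is_coupling (kern MX x) (kern MY y) (K t x y).

Fixpoint law (X Y : finType) (mu : X -> Y -> R)
  (K : nat -> X -> Y -> X -> Y -> R) (t : nat) : X -> Y -> R :=
  match t with
  | 0 => mu
  | t'.+1 => fun x' y' =>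
      \sum_(x : X) \sum_(y : Y) law mu K t' x y * K t' x y x' y'
  end.

Definition expect_at (X Y : finType) (mu : X -> Y -> R)
  (K : nat -> X -> Y -> X -> Y -> R) (t : nat) (C : X -> Y -> R) : R :=
  \sum_(x : X) \sum_(y : Y) law mu K t x y * C x y.

Definition dWL (X Y : finType) (MX : fmc X) (MY : fmc Y) (delta : R) (k : nat)
  (C : X -> Y -> R) : R :=
  inf [set r | exists mu K, is_markov_coupling MX MY mu K /\
     r = \sum_(t < k) delta * (1 - delta) ^+ t * expect_at mu K t C
         + (1 - delta) ^+ k * expect_at mu K k C].

Fixpoint Cdl (X Y : finType) (MX : fmc X) (MY : fmc Y) (delta : R)
  (C : X -> Y -> R) (l : nat) : X -> Y -> R :=
  match l with
  | 0 => C
  | l'.+1 => fun i j =>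
      delta * C i j + (1 - delta) * dW (kern MX i) (kern MY j) (Cdl MX MY delta C l')
  end.

End Defs.

(* Main.v *)
Require Import Defs.
From HB Require Import structures.
From mathcomp Require Import all_boot all_order all_algebra.
From mathcomp Require Import boolp classical_sets reals.
From mathcomp Require Import ring lra.
Import Order.TTheory GRing.Theory Num.Theory.
Local Open Scope ring_scope.

Local Open Scope classical_set_scope.
Section H.
Variable R : realType.
Variables X Y : finType.

Lemma prod_coupling (a : X -> R) (b : Y -> R) :
  is_pmf a -> is_pmf b -> is_coupling a b (fun x y => a x * b y).
Proof.
move=> [a0 a1] [b0 b1]; split.
- by move=> x y; rewrite mulr_ge0.
- by move=> x; rewrite -mulr_sumr b1 mulr1.
- by move=> y; rewrite -mulr_suml a1 mul1r.
Qed.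

Definition dWset (a : X -> R) (b : Y -> R) (D : X -> Y -> R) :=
  [set r | exists p, is_coupling a b p /\
                 r = \sum_(x : X) \sum_(y : Y) p x y * D x y].

Lemma dWset_lb (a : X -> R) (b : Y -> R) (D : X -> Y -> R) : (forall x y, 0 <= D x y) -> lbound (dWset a b D) 0.
Proof.
move=> D0 r [p [[p0 _ _] ->]].
by apply: sumr_ge0 => x _; apply: sumr_ge0 => y _; rewrite mulr_ge0.
Qed.

Lemma dWset_ne (a : X -> R) (b : Y -> R) (D : X -> Y -> R) : is_pmf a -> is_pmf b -> dWset a b D !=set0.
Proof.
move=> pa pb; eexists; exists (fun x y => a x * b y); split; last reflexivity.
exact: prod_coupling.
Qed.

Lemma dW_le (a : X -> R) (b : Y -> R) (D : X -> Y -> R) p : (forall x y, 0 <= D x y) -> is_coupling a b p ->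
  dW a b D <= \sum_(x : X) \sum_(y : Y) p x y * D x y.
Proof.
move=> D0 cp; apply: (@ge_inf _ (dWset a b D)).
  by exists 0; apply: dWset_lb.
by exists p.
Qed.

Lemma dW_ge0 (a : X -> R) (b : Y -> R) (D : X -> Y -> R) : (forall x y, 0 <= D x y) -> is_pmf a -> is_pmf b ->
  0 <= dW a b D.
Proof.
move=> D0 pa pb; apply: lb_le_inf; first exact: dWset_ne.
exact: dWset_lb.
Qed.

Lemma dW_approx (a : X -> R) (b : Y -> R) (D : X -> Y -> R) (eps : R) : (forall x y, 0 <= D x y) -> is_pmf a -> is_pmf b ->
  0 < eps -> exists p, is_coupling a b p /\
     \sum_(x : X) \sum_(y : Y) p x y * D x y < dW a b D + eps.
Proof.
move=> D0 pa pb e0.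
have [r [p [cp ->]] lt] := @inf_adherent _ (dWset a b D) eps e0
   (conj (@dWset_ne a b D pa pb) (ex_intro _ 0 (@dWset_lb a b D D0))).
by exists p.
Qed.

End H.

Local Close Scope classical_set_scope.
Section M.
Variable R : realType.
Variables X Y : finType.

Lemma expect_succ (mu : X -> Y -> R) K t (D : X -> Y -> R) :
  expect_at mu K t.+1 D = \sum_(x : X) \sum_(y : Y) law mu K t x y *
     (\sum_(x' : X) \sum_(y' : Y) K t x y x' y' * D x' y').
Proof.
rewrite /expect_at /=.
transitivity (\sum_(x' : X) \sum_(y' : Y) \sum_(x : X) \sum_(y : Y)
   law mu K t x y * K t x y x' y' * D x' y').
  apply: eq_bigr => x' _; apply: eq_bigr => y' _.
  rewrite mulr_suml; apply: eq_bigr => x _; rewrite mulr_suml; done.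
transitivity (\sum_(x : X) \sum_(y : Y) \sum_(x' : X) \sum_(y' : Y)
   law mu K t x y * K t x y x' y' * D x' y'); last first.
  apply: eq_bigr => x _; apply: eq_bigr => y _.
  rewrite mulr_sumr; apply: eq_bigr => x' _; rewrite mulr_sumr.
  by apply: eq_bigr => y' _; rewrite mulrA.
under eq_bigr => x' _ do rewrite exchange_big.
rewrite exchange_big; apply: eq_bigr => x _.
under eq_bigr => x' _ do rewrite exchange_big.
by rewrite exchange_big.
Qed.

Variables (MX : fmc R X) (MY : fmc R Y) (delta : R) (C : X -> Y -> R).
Hypothesis hC : forall x y, 0 <= C x y.
Hypothesis hd0 : 0 <= delta.
Hypothesis hd1 : delta <= 1.

Lemma Cdl_ge0 n x y : 0 <= Cdl MX MY delta C n x y.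
Proof.
elim: n x y => [|n IH] x y /=; first exact: hC.
apply: addr_ge0; first by rewrite mulr_ge0.
rewrite mulr_ge0 ?subr_ge0 //; apply: dW_ge0 => //; exact: kern_pmf.
Qed.

Section Cpl.
Variables (mu : X -> Y -> R) (K : nat -> X -> Y -> X -> Y -> R).
Hypothesis hK : is_markov_coupling MX MY mu K.

Lemma law_ge0 t x y : 0 <= law mu K t x y.
Proof.
case: hK => [[mu0 _ _] hk].
elim: t x y => [|t IH] x y /=; first exact: mu0.
apply: sumr_ge0 => a _; apply: sumr_ge0 => b _; apply: mulr_ge0 => //.
by case: (hk t a b).
Qed.

Lemma law_mass t : expect_at mu K t (fun _ _ => 1) = 1.
Proof.
case: hK => [[_ mu1 _] hk].
elim: t => [|t IH].
  rewrite /expect_at /=.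
  under eq_bigr => x _ do under eq_bigr => y _ do rewrite mulr1.
  under eq_bigr => x _ do rewrite mu1.
  by case: (init_pmf MX).
rewrite expect_succ -[RHS]IH /expect_at; apply: eq_bigr => x _; apply: eq_bigr => y _.
congr (_ * _).
case: (hk t x y) => _ h1 _.
under eq_bigr => x' _ do under eq_bigr => y' _ do rewrite mulr1.
under eq_bigr => x' _ do rewrite h1.
by case: (kern_pmf MX x).
Qed.

Definition F n m := \sum_(t < m) delta * (1 - delta) ^+ t * expect_at mu K t C
  + (1 - delta) ^+ m * expect_at mu K m (Cdl MX MY delta C n).

Definition gap n m := \sum_(x : X) \sum_(y : Y) law mu K m x y *
   ((\sum_(x' : X) \sum_(y' : Y) K m x y x' y' * Cdl MX MY delta C n x' y')
     - dW (kern MX x) (kern MY y) (Cdl MX MY delta C n)).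

Lemma F_step n m : F n m.+1 = F n.+1 m + (1 - delta) ^+ m.+1 * gap n m.
Proof.
rewrite /F big_ord_recr /= expect_succ.
have -> : expect_at mu K m (Cdl MX MY delta C n.+1) =
   delta * expect_at mu K m C + (1 - delta) * \sum_(x : X) \sum_(y : Y) law mu K m x y *
      dW (kern MX x) (kern MY y) (Cdl MX MY delta C n).
  rewrite /expect_at /= !mulr_sumr -big_split; apply: eq_bigr => x _.
  rewrite !mulr_sumr -big_split; apply: eq_bigr => y _ /=; ring.
have -> : gap n m = \sum_(x : X) \sum_(y : Y) law mu K m x y *
   (\sum_(x' : X) \sum_(y' : Y) K m x y x' y' * Cdl MX MY delta C n x' y')
   - \sum_(x : X) \sum_(y : Y) law mu K m x y *
      dW (kern MX x) (kern MY y) (Cdl MX MY delta C n).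
  rewrite /gap -sumrB; apply: eq_bigr => x _; rewrite -sumrB; apply: eq_bigr => y _; ring.
rewrite exprS; ring.
Qed.

Lemma gap_ge0 n m : 0 <= gap n m.
Proof.
apply: sumr_ge0 => x _; apply: sumr_ge0 => y _; apply: mulr_ge0; first exact: law_ge0.
rewrite subr_ge0; apply: dW_le; first exact: Cdl_ge0.
by case: hK => _ /(_ m x y).
Qed.

Lemma F_lower n m : F 0 (m + n) >= F n m.
Proof.
elim: n m => [|n IH] m; first by rewrite addn0.
rewrite addnS -addSn; apply: le_trans (IH m.+1).
rewrite F_step lerDl mulr_ge0 ?gap_ge0 //.
by rewrite exprn_ge0 // subr_ge0.
Qed.

Lemma gap_le n m (eps : R) : 0 <= eps ->
  (forall x y, \sum_(x' : X) \sum_(y' : Y) K m x y x' y' * Cdl MX MY delta C n x' y'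
     <= dW (kern MX x) (kern MY y) (Cdl MX MY delta C n) + eps) ->
  gap n m <= eps.
Proof.
move=> e0 h.
apply: (@le_trans _ _ (expect_at mu K m (fun _ _ => eps))).
  apply: ler_sum => x _; apply: ler_sum => y _; apply: ler_wpM2l; first exact: law_ge0.
  by have := h x y; lra.
rewrite -[leRHS]mulr1 -(law_mass m) /expect_at mulr_sumr; apply: ler_sum => x _.
rewrite mulr_sumr; apply: ler_sum => y _; by rewrite mulr1 mulrC.
Qed.

Lemma F_upper k (eps : R) : 0 <= eps ->
  (forall n m, (m + n.+1)%N = k -> forall x y,
     \sum_(x' : X) \sum_(y' : Y) K m x y x' y' * Cdl MX MY delta C n x' y'
     <= dW (kern MX x) (kern MY y) (Cdl MX MY delta C n) + eps) ->
  forall n m, (m + n)%N = k -> F 0 k <= F n m + n%:R * eps.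
Proof.
move=> e0 hq; elim=> [|n IH] m hmn.
  by rewrite addn0 in hmn; rewrite hmn mul0r addr0.
have := IH m.+1; rewrite addSn -addnS => /(_ hmn) h1.
apply: (le_trans h1); rewrite F_step.
suff : (1 - delta) ^+ m.+1 * gap n m <= eps.
  by rewrite mulrSr; lra.
apply: (@le_trans _ _ (gap n m)).
  apply: ler_piMl; first exact: gap_ge0.
  by rewrite exprn_ile1 // ?subr_ge0 // lerBlDr lerDl.
exact: gap_le (hq n m hmn).
Qed.

End Cpl.
End M.

Theorem proposition18 (R : realType) (X Y : finType) (MX : fmc R X) (MY : fmc R Y)
  (C : X -> Y -> R) (hC : forall x y, 0 <= C x y)
  (delta : R) (hd0 : 0 <= delta) (hd1 : delta <= 1) (k : nat) :
  dWL MX MY delta k C = dW (init MX) (init MY) (Cdl MX MY delta C k).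
Proof.
rewrite /dWL; set S := (X in inf X = _).
set d := dW _ _ _.
have V0 := @Cdl_ge0 _ _ _ MX MY delta C hC hd0 hd1.
have lbS : forall r, S r -> d <= r.
  move=> r [mu [K [hK ->]]].
  have := @F_lower _ _ _ MX MY delta C hC hd0 hd1 _ _ hK k 0; rewrite add0n /F big_ord0 add0r expr0 mul1r.
  apply: le_trans; apply: dW_le => //; by case: hK.
have neS : exists r, S r.
  eexists; exists (fun x y => init MX x * init MY y).
  exists (fun _ x y x' y' => kern MX x x' * kern MY y y'); split; last reflexivity.
  split; first by apply: prod_coupling; exact: init_pmf.
  by move=> t x y; apply: prod_coupling; exact: kern_pmf.
apply/eqP; rewrite eq_le; apply/andP; split; last first.
  by apply: lb_le_inf => //; exact: lbS.
apply/ler_addgt0Pr => e e0.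
have k0 : (k.+1%:R : R) != 0 by rewrite pnatr_eq0.
set e' := e / k.+1%:R.
have e'0 : 0 < e' by rewrite /e' divr_gt0 // ltr0n.
have [mu [hmu hmuV]] := @dW_approx _ _ _ _ _ _ e' (V0 k) (init_pmf MX) (init_pmf MY) e'0.
have hq : forall (n : nat) (x : X) (y : Y), exists p : X -> Y -> R,
   is_coupling (kern MX x) (kern MY y) p /\
   \sum_(x' : X) \sum_(y' : Y) p x' y' * Cdl MX MY delta C n x' y'
    < dW (kern MX x) (kern MY y) (Cdl MX MY delta C n) + e'.
  by move=> n x y; apply: dW_approx => //; exact: kern_pmf.
pose q n x y := projT1 (cid (hq n x y)).
pose K t := q (k.-1 - t)%N.
have hK : is_markov_coupling MX MY mu K.
  split => // t x y; rewrite /K /q; case: (cid _) => p [hp _] //.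
have Sv : S (@F _ _ _ MX MY delta C mu K 0 k) by exists mu, K.
apply: (@le_trans _ _ (@F _ _ _ MX MY delta C mu K 0 k)).
  apply: ge_inf => //; by exists d.
apply: (@le_trans _ _ (@F _ _ _ MX MY delta C mu K k 0 + k%:R * e')).
  apply: (@F_upper _ _ _ MX MY delta C hC hd0 hd1 _ _ hK k e' (ltW e'0)) => [n m hmn x y|]; last by rewrite add0n.
  rewrite /K /q; have -> : (k.-1 - m = n)%N by rewrite -hmn addnS /= addKn.
  by case: (cid _) => p [_ hp] /=; apply: ltW.
rewrite /F big_ord0 add0r expr0 mul1r.
have hee : k%:R * e' + e' = e.
  have -> : k%:R * e' + e' = (k%:R + 1) * e' by ring.
  by rewrite natr1 /e' mulrCA mulfV // mulr1.
have : expect_at mu K 0 (Cdl MX MY delta C k) < d + e' by [].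
lra.
Qed.
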